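(* For every real $r\ge 0$, the sphere $S_r(\Delta_1)=\{Y\in\mathcal{GH}: d_{GH}(\Delta_1,Y)=r\}$ is path connected, i.e., any two of its elements can be joined by a continuous curve in $\mathcal{GH}$ whose image lies in $S_r(\Delta_1)$.
   Context: All metric spaces (with finite-valued metrics) are considered up to isometry. $\mathcal{GH}$ denotes the class (in the sense of von Neumann–Bernays–Gödel set theory) of representatives of isometry classes of all metric spaces. $d_{GH}$ is the Gromov–Hausdorff distance, with values in $[0,\infty]$: $d_{GH}(X,Y)$ is the infimum of $r$ such that there exist a metric space $Z$ and subsets $X',Y'\subset Z$ isometric to $X,Y$ with Hausdorff distance $d_H(X',Y')\le r$. Topology on the class: for each cardinal $n$, the subclass $\mathcal{GH}_n$ of spaces of cardinality at most $n$ is a set, endowed with the topology whose base consists of the open balls of $d_{GH}$. A map $f$ from a topological space $Z$ to $\mathcal{GH}$ is continuous if it is continuous as a map into $\mathcal{GH}_n$ for some (equivalently, every) cardinal $n$ with $f(Z)\subset\mathcal{GH}_n$. A continuous curve is a continuous map from a segment $[a,b]$. $\Delta_1$ is the single-point metric space. *)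

(* Defs.v *)
From Stdlib Require Import Reals Lra.
From Coquelicot Require Import Coquelicot.
Open Scope R_scope.

Record MetricSpace := {
  carrier :> Type;
  dist : carrier -> carrier -> R;
  carrier_inhabited : inhabited carrier;
  dist_eq0 : forall x y, dist x y = 0 <-> x = y;
  dist_sym : forall x y, dist x y = dist y x;
  dist_tri : forall x y z, dist x z <= dist x y + dist y z
}.

(* Isometries (spaces are considered up to isometry). *)
Definition isometric (X Y : MetricSpace) : Prop :=
  exists (f : X -> Y) (g : Y -> X),
    (forall x, g (f x) = x) /\ (forall y, f (g y) = y) /\
    (forall x x', dist Y (f x) (f x') = dist X x x').

Definition isometric_embedding (X Z : MetricSpace) (f : X -> Z) : Prop :=
  forall x x', dist Z (f x) (f x') = dist X x x'.

(* Hausdorff distance in [0, +oo] between subsets A B of a metric space Z: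
   the infimum of r > 0 such that each set lies in the open r-neighbourhood
   of the other (+oo if no such r). *)
Definition hausdorff_dist (Z : MetricSpace) (A B : Z -> Prop) : Rbar :=
  Glb_Rbar (fun r => 0 < r /\
    (forall a, A a -> exists b, B b /\ dist Z a b < r) /\
    (forall b, B b -> exists a, A a /\ dist Z a b < r)).

Definition dGH (X Y : MetricSpace) : Rbar :=
  Glb_Rbar (fun r => exists (Z : MetricSpace) (f : X -> Z) (g : Y -> Z),
    isometric_embedding X Z f /\ isometric_embedding Y Z g /\
    Rbar_le (hausdorff_dist Z (fun z => exists x, f x = z)
                              (fun z => exists y, g y = z)) r).

Definition Delta1 : MetricSpace.
Proof.
  refine {| carrier := unit; dist := fun _ _ => 0 |}.
  - exact (inhabits tt).
  - intros [] []; split; reflexivity.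
  - reflexivity.
  - intros; lra.
Defined.

Definition in_sphere_Delta1 (r : R) (Y : MetricSpace) : Prop :=
  dGH Delta1 Y = Finite r.

Definition GH_continuous_on (a b : R) (f : R -> MetricSpace) : Prop :=
  forall t0, a <= t0 <= b -> forall eps, 0 < eps ->
    exists delta, 0 < delta /\
      forall t, a <= t <= b -> Rabs (t - t0) < delta ->
        Rbar_lt (dGH (f t0) (f t)) (Finite eps).

(* Main.v *)
From Pilot Require Import Defs.
From Stdlib Require Import Reals Lra Psatz ProofIrrelevance Classical.
From Coquelicot Require Import Coquelicot.
Open Scope R_scope.
Notation mdist := Pilot.Defs.dist.

Lemma glb_mem (E : R -> Prop) c : E c -> Rbar_le (Glb_Rbar E) (Finite c).
Proof. intros H. destruct (Glb_Rbar_correct E) as [H1 _]. exact (H1 c H). Qed.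

Lemma glb_ge (E : R -> Prop) x : (forall h, E h -> x <= h) -> Rbar_le (Finite x) (Glb_Rbar E).
Proof. intros H. destruct (Glb_Rbar_correct E) as [_ H2]. apply H2. intros h Hh. exact (H h Hh). Qed.

Lemma rbar_le_eps (G : Rbar) x : (forall c, x < c -> Rbar_le G (Finite c)) -> Rbar_le G (Finite x).
Proof.
  intros H. destruct G as [g| |]; simpl in *.
  - destruct (Rle_dec g x) as [h|h]; auto. exfalso.
    specialize (H ((g+x)/2)). simpl in H. lra.
  - specialize (H (x+1)). simpl in H. apply H. lra.
  - auto.
Qed.

Lemma glb_approx (E : R -> Prop) x eps : Rbar_le (Glb_Rbar E) (Finite x) -> 0 < eps ->
  exists h, E h /\ h < x + eps.
Proof.
  intros H He. apply NNPP. intros Hn.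
  assert (Rbar_le (Finite (x+eps)) (Glb_Rbar E)).
  { apply glb_ge. intros h Hh. apply Rnot_lt_le. intros Hl. apply Hn. eauto. }
  destruct (Glb_Rbar E); simpl in *; lra.
Qed.

Lemma dist_nonneg (M : MetricSpace) x y : 0 <= mdist M x y.
Proof.
  pose proof (Defs.dist_tri M x y x). pose proof (Defs.dist_sym M x y).
  assert (mdist M x x = 0) by (apply Defs.dist_eq0; reflexivity). lra.
Qed.

Lemma dist_refl (M : MetricSpace) x : mdist M x x = 0.
Proof. apply Defs.dist_eq0; reflexivity. Qed.

Definition glue_dist (A B : MetricSpace) (e : A -> B -> R) (u v : A + B) : R :=
  match u, v with
  | inl a, inl a' => mdist A a a'
  | inr b, inr b' => mdist B b b'
  | inl a, inr b => e a b
  | inr b, inl a => e a b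
  end.

Definition Glue (A B : MetricSpace) (e : A -> B -> R)
  (epos : forall a b, 0 < e a b)
  (c1 : forall a a' b, e a b <= mdist A a a' + e a' b)
  (c2 : forall a b b', e a b <= e a b' + mdist B b' b)
  (c3 : forall a a' b, mdist A a a' <= e a b + e a' b)
  (c4 : forall a b b', mdist B b b' <= e a b + e a b') : MetricSpace.
Proof.
  refine {| carrier := (A + B)%type; Defs.dist := glue_dist A B e |}.
  - destruct (carrier_inhabited A) as [a]. exact (inhabits (inl a)).
  - intros [a|b] [a'|b']; simpl.
    + rewrite Defs.dist_eq0. split; [intros ->; reflexivity | intros H; injection H; auto].
    + split; [intros H; specialize (epos a b'); lra | discriminate].
    + split; [intros H; specialize (epos a' b); lra | discriminate].
    + rewrite Defs.dist_eq0. split; [intros ->; reflexivity | intros H; injection H; auto].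
  - intros [a|b] [a'|b']; simpl; auto using Defs.dist_sym.
  - intros [a|b] [a'|b'] [a''|b'']; simpl;
    try (apply c1 || apply c2 || apply c3 || apply c4 || apply Defs.dist_tri).
    + rewrite (Defs.dist_sym A a' a''), Rplus_comm. apply c1.
    + rewrite (Defs.dist_sym B b b'), Rplus_comm. apply c2.
Defined.

Lemma glue_dGH (A B : MetricSpace) (e : A -> B -> R)
  (epos : forall a b, 0 < e a b)
  (c1 : forall a a' b, e a b <= mdist A a a' + e a' b)
  (c2 : forall a b b', e a b <= e a b' + mdist B b' b)
  (c3 : forall a a' b, mdist A a a' <= e a b + e a' b)
  (c4 : forall a b b', mdist B b b' <= e a b + e a b') rho :
  0 < rho -> (forall a, exists b, e a b < rho) -> (forall b, exists a, e a b < rho) ->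
  Rbar_le (dGH A B) (Finite rho).
Proof.
  intros Hr Ha Hb. apply glb_mem.
  exists (Glue A B e epos c1 c2 c3 c4), inl, inr.
  split; [intros x x'; reflexivity|]. split; [intros x x'; reflexivity|].
  apply glb_mem. split; [exact Hr|]. split.
  - intros z [a <-]. destruct (Ha a) as [b Hb']. exists (inr b). split; [eauto|]. exact Hb'.
  - intros z [b <-]. destruct (Hb b) as [a Ha']. exists (inl a). split; [eauto|]. exact Ha'.
Qed.
Definition Diam (Z : MetricSpace) r := (forall z z', mdist Z z z' <= 2*r) /\
  (forall eps, 0 < eps -> exists z z', 2*r - eps < mdist Z z z').

Lemma le_eps a b : (forall eps, 0 < eps -> a <= b + eps) -> a <= b.
Proof. intros H. destruct (Rle_dec a b) as [h|h]; auto. specialize (H ((a-b)/2)). lra. Qed.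

Lemma L1 (Z : MetricSpace) (rho : R) :
  (exists (W : MetricSpace) (f : Delta1 -> W) (g : Z -> W),
    isometric_embedding Delta1 W f /\ isometric_embedding Z W g /\
    Rbar_le (hausdorff_dist W (fun z => exists x, f x = z)
                              (fun z => exists y, g y = z)) rho) ->
  forall z z', mdist Z z z' <= 2*rho.
Proof.
  intros [W [f [g [_ [Hg Hh]]]]] z z'.
  apply le_eps. intros eps He.
  destruct (glb_approx _ _ (eps/2) Hh) as [h [[hpos [_ H2]] hlt]]; [lra|].
  destruct (H2 (g z) (ex_intro _ z eq_refl)) as [a [[[] <-] Ha]].
  destruct (H2 (g z') (ex_intro _ z' eq_refl)) as [a' [[[] <-] Ha']].
  rewrite <- (Hg z z').
  pose proof (Defs.dist_tri W (g z) (f tt) (g z')).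
  rewrite (Defs.dist_sym W (g z) (f tt)) in H. lra.
Qed.

Lemma dGH_Delta1_le (Z : MetricSpace) c : 0 < c -> (forall z z', mdist Z z z' <= 2*c) ->
  forall rho, c < rho -> Rbar_le (dGH Delta1 Z) (Finite rho).
Proof.
  intros Hc Hd rho Hr.
  unshelve eapply (glue_dGH Delta1 Z (fun _ _ => c)); simpl.
  all: try (intros; lra).
  - intros _ b b'. pose proof (dist_nonneg Z b' b). lra.
  - intros _ b b'. specialize (Hd b b'). lra.
  - intros _. destruct (carrier_inhabited Z) as [z]. exists z. lra.
  - intros _. exists tt. lra.
Qed.

Lemma sphere_to_diam (Z : MetricSpace) r : 0 <= r -> dGH Delta1 Z = Finite r -> Diam Z r.
Proof.
  intros hr H. split.
  - intros z z'. apply le_eps. intros eps He.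
    assert (Hle : Rbar_le (dGH Delta1 Z) (Finite r)) by (rewrite H; simpl; lra).
    destruct (glb_approx _ _ (eps/2) Hle) as [h [Hh hlt]]; [lra|].
    pose proof (L1 Z h Hh z z'). lra.
  - intros eps He. apply NNPP. intros Hn.
    assert (Hall : forall z z', mdist Z z z' <= 2*r - eps).
    { intros z z'. apply Rnot_lt_le. intros Hl. apply Hn. eauto. }
    destruct (carrier_inhabited Z) as [z0].
    pose proof (Hall z0 z0) as H0. rewrite dist_refl in H0.
    assert (Hc : Rbar_le (dGH Delta1 Z) (Finite (r - eps/4))).
    { apply rbar_le_eps. apply (dGH_Delta1_le Z (r - eps/4)); [lra|].
      intros z z'; specialize (Hall z z'); lra. }
    rewrite H in Hc. simpl in Hc. lra.
Qed.

Lemma diam_to_sphere (Z : MetricSpace) r : 0 <= r -> Diam Z r -> dGH Delta1 Z = Finite r.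
Proof.
  intros hr [Hb Hs]. apply Rbar_le_antisym.
  - apply rbar_le_eps. intros rho Hr.
    apply (dGH_Delta1_le Z ((r+rho)/2)); [lra| |lra].
    intros z z'; specialize (Hb z z'); lra.
  - apply glb_ge. intros h Hh. pose proof (L1 Z h Hh) as Hd.
    apply Rnot_lt_le. intros Hl.
    destruct (Hs (2*r - 2*h)) as [z [z' Hz]]; [lra|].
    specialize (Hd z z'). lra.
Qed.
Definition alpha (s : R) := Rmin 1 (Rmax 0 (2 - s)).
Definition beta (s : R) := Rmin 1 (Rmax 0 s).

Lemma alpha_b s : 0 <= alpha s <= 1.
Proof. unfold alpha, Rmin, Rmax; repeat destruct Rle_dec; lra. Qed.
Lemma beta_b s : 0 <= beta s <= 1.
Proof. unfold beta, Rmin, Rmax; repeat destruct Rle_dec; lra. Qed.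
Lemma alpha_lip s t : Rabs (alpha s - alpha t) <= Rabs (s - t).
Proof. unfold alpha, Rmin, Rmax, Rabs; repeat destruct Rle_dec; repeat destruct Rcase_abs; lra. Qed.
Lemma beta_lip s t : Rabs (beta s - beta t) <= Rabs (s - t).
Proof. unfold beta, Rmin, Rmax, Rabs; repeat destruct Rle_dec; repeat destruct Rcase_abs; lra. Qed.

Lemma Rmax_le3 a b c d : a <= c -> b <= d -> Rmax a b <= Rmax c d.
Proof. unfold Rmax; repeat destruct Rle_dec; lra. Qed.

Definition dw (X Y : MetricSpace) (wa wb : R) (p q : X * Y) : R :=
  Rmax (wa * mdist X (fst p) (fst q)) (wb * mdist Y (snd p) (snd q)).

Definition dfib (X Y : MetricSpace) (s : R) (p q : X * Y) : R := dw X Y (alpha s) (beta s) p q.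

Lemma dw_nonneg X Y wa wb p q : 0 <= wa -> 0 <= dw X Y wa wb p q.
Proof.
  intros Ha. unfold dw. pose proof (dist_nonneg X (fst p) (fst q)).
  eapply Rle_trans; [|apply Rmax_l]. nra.
Qed.

Lemma dw_sym X Y wa wb p q : dw X Y wa wb p q = dw X Y wa wb q p.
Proof. unfold dw. rewrite (Defs.dist_sym X), (Defs.dist_sym Y). reflexivity. Qed.

Lemma dw_tri X Y wa wb p q w : 0 <= wa -> 0 <= wb ->
  dw X Y wa wb p w <= dw X Y wa wb p q + dw X Y wa wb q w.
Proof.
  intros Ha Hb. unfold dw.
  pose proof (Defs.dist_tri X (fst p) (fst q) (fst w)).
  pose proof (Defs.dist_tri Y (snd p) (snd q) (snd w)).
  set (a1 := wa * mdist X (fst p) (fst q)).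
  set (a2 := wa * mdist X (fst q) (fst w)).
  set (b1 := wb * mdist Y (snd p) (snd q)).
  set (b2 := wb * mdist Y (snd q) (snd w)).
  apply Rmax_lub.
  - assert (wa * mdist X (fst p) (fst w) <= a1 + a2) by (unfold a1, a2; nra).
    pose proof (Rmax_l a1 b1). pose proof (Rmax_l a2 b2). lra.
  - assert (wb * mdist Y (snd p) (snd w) <= b1 + b2) by (unfold b1, b2; nra).
    pose proof (Rmax_r a1 b1). pose proof (Rmax_r a2 b2). lra.
Qed.

Lemma dw_mono X Y wa wb wa' wb' p q : 0 <= wa <= wa' -> 0 <= wb <= wb' ->
  dw X Y wa wb p q <= dw X Y wa' wb' p q.
Proof.
  intros Ha Hb. unfold dw.
  pose proof (dist_nonneg X (fst p) (fst q)). pose proof (dist_nonneg Y (snd p) (snd q)).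
  apply Rmax_le3; nra.
Qed.

Lemma scale_lip (r a u v L : R) : 0 <= a <= 2*r -> Rabs (u - v) <= L ->
  u * a <= v * a + 2 * r * L.
Proof.
  intros Ha Hu.
  assert (u - v <= Rabs (u - v)) by (unfold Rabs; destruct Rcase_abs; lra).
  assert (0 <= L) by (pose proof (Rabs_pos (u - v)); lra).
  assert (0 <= (L - (u - v)) * a) by (apply Rmult_le_pos; lra).
  assert (0 <= L * (2 * r - a)) by (apply Rmult_le_pos; lra).
  nra.
Qed.

Lemma dw_lip X Y r (hXb : forall x x', mdist X x x' <= 2*r) (hYb : forall y y', mdist Y y y' <= 2*r)
  wa wb wa' wb' L p q : Rabs (wa - wa') <= L -> Rabs (wb - wb') <= L ->
  dw X Y wa wb p q <= dw X Y wa' wb' p q + 2 * r * L.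
Proof.
  intros H1 H2. unfold dw.
  pose proof (dist_nonneg X (fst p) (fst q)). pose proof (dist_nonneg Y (snd p) (snd q)).
  specialize (hXb (fst p) (fst q)). specialize (hYb (snd p) (snd q)).
  pose proof (scale_lip r (mdist X (fst p) (fst q)) wa wa' L ltac:(lra) H1).
  pose proof (scale_lip r (mdist Y (snd p) (snd q)) wb wb' L ltac:(lra) H2).
  pose proof (Rmax_l (wa' * mdist X (fst p) (fst q)) (wb' * mdist Y (snd p) (snd q))).
  pose proof (Rmax_r (wa' * mdist X (fst p) (fst q)) (wb' * mdist Y (snd p) (snd q))).
  apply Rmax_lub; lra.
Qed.

Definition Cfib (X Y : MetricSpace) (x0 : X) (y0 : Y) (s : R) (p : X * Y) : Prop :=
  (beta s = 0 -> snd p = y0) /\ (alpha s = 0 -> fst p = x0).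

Definition Fib (X Y : MetricSpace) (x0 : X) (y0 : Y) (s : R) : MetricSpace.
Proof.
  refine {| carrier := {p : X * Y | Cfib X Y x0 y0 s p};
            Defs.dist := fun p q => dfib X Y s (proj1_sig p) (proj1_sig q) |}.
  - exact (inhabits (exist _ (x0, y0) (conj (fun _ => eq_refl) (fun _ => eq_refl)))).
  - intros [[x y] [H1 H2]] [[x' y'] [H1' H2']]; simpl. split.
    + intros H. unfold dfib in H; simpl in H.
      pose proof (alpha_b s). pose proof (beta_b s). unfold dw in H; simpl in H.
      pose proof (dist_nonneg X x x'). pose proof (dist_nonneg Y y y').
      assert (Ha : alpha s * mdist X x x' = 0).
      { pose proof (Rmax_l (alpha s * mdist X x x') (beta s * mdist Y y y')). nra. }
      assert (Hb : beta s * mdist Y y y' = 0).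
      { pose proof (Rmax_r (alpha s * mdist X x x') (beta s * mdist Y y y')). nra. }
      apply subset_eq_compat. simpl in *.
      assert (x = x').
      { destruct (Rmult_integral _ _ Ha) as [h|h].
        - rewrite (H2 h), (H2' h). reflexivity.
        - apply Defs.dist_eq0. exact h. }
      assert (y = y').
      { destruct (Rmult_integral _ _ Hb) as [h|h].
        - rewrite (H1 h), (H1' h). reflexivity.
        - apply Defs.dist_eq0. exact h. }
      subst. reflexivity.
    + intros H. injection H. intros -> ->. unfold dfib, dw; simpl.
      rewrite !dist_refl, !Rmult_0_r. unfold Rmax; destruct Rle_dec; reflexivity.
  - intros p q. apply dw_sym.
  - intros p q w. apply dw_tri; [apply alpha_b|apply beta_b].
Defined.
Definition projv (X Y : MetricSpace) (x0 : X) (y0 : Y) (v : R) (p : X * Y) : X * Y :=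
  (if Req_EM_T (alpha v) 0 then x0 else fst p, if Req_EM_T (beta v) 0 then y0 else snd p).

Lemma projv_C X Y x0 y0 v p : Cfib X Y x0 y0 v (projv X Y x0 y0 v p).
Proof.
  unfold Cfib, projv; simpl. split; intros H.
  - destruct Req_EM_T; [reflexivity|contradiction].
  - destruct Req_EM_T; [reflexivity|contradiction].
Qed.

Lemma projv_zero X Y x0 y0 v p : dfib X Y v p (projv X Y x0 y0 v p) <= 0.
Proof.
  unfold dfib, dw, projv; simpl. apply Rmax_lub.
  - destruct Req_EM_T as [h|h]; [rewrite h; lra| rewrite dist_refl; lra].
  - destruct Req_EM_T as [h|h]; [rewrite h; lra| rewrite dist_refl; lra].
Qed.

Lemma min_lip a b : Rabs (a - Rmin a b) <= Rabs (a - b).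
Proof. unfold Rmin, Rabs; repeat destruct Rle_dec; repeat destruct Rcase_abs; lra. Qed.

Definition dstar (X Y : MetricSpace) s t p q :=
  dw X Y (Rmin (alpha s) (alpha t)) (Rmin (beta s) (beta t)) p q.

Lemma wmin_b s t : 0 <= Rmin (alpha s) (alpha t) /\ 0 <= Rmin (beta s) (beta t).
Proof.
  pose proof (alpha_b s); pose proof (alpha_b t); pose proof (beta_b s); pose proof (beta_b t).
  unfold Rmin; split; destruct Rle_dec; lra.
Qed.

Lemma dstar_le_s X Y s t p q : dstar X Y s t p q <= dfib X Y s p q.
Proof.
  destruct (wmin_b s t). apply dw_mono; split; auto; apply Rmin_l.
Qed.

Lemma dstar_le_t X Y s t p q : dstar X Y s t p q <= dfib X Y t p q.
Proof.
  destruct (wmin_b s t). apply dw_mono; split; auto; apply Rmin_r.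
Qed.

Lemma dstar_tri X Y s t p q w : dstar X Y s t p w <= dstar X Y s t p q + dstar X Y s t q w.
Proof. destruct (wmin_b s t). apply dw_tri; auto. Qed.

Lemma dfib_s_lip X Y r (hXb : forall x x', mdist X x x' <= 2*r)
  (hYb : forall y y', mdist Y y y' <= 2*r) s t p q :
  dfib X Y s p q <= dstar X Y s t p q + 2 * (r * Rabs (s - t)).
Proof.
  replace (2 * (r * Rabs (s - t))) with (2 * r * Rabs (s - t)) by ring.
  apply (dw_lip X Y r hXb hYb).
  - eapply Rle_trans; [apply min_lip|apply alpha_lip].
  - eapply Rle_trans; [apply min_lip|apply beta_lip].
Qed.

Lemma dfib_t_lip X Y r (hXb : forall x x', mdist X x x' <= 2*r)
  (hYb : forall y y', mdist Y y y' <= 2*r) s t p q :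
  dfib X Y t p q <= dstar X Y s t p q + 2 * (r * Rabs (s - t)).
Proof.
  replace (2 * (r * Rabs (s - t))) with (2 * r * Rabs (t - s)) by (rewrite Rabs_minus_sym; ring).
  unfold dstar. rewrite (Rmin_comm (alpha s)), (Rmin_comm (beta s)).
  apply (dw_lip X Y r hXb hYb).
  - eapply Rle_trans; [apply min_lip|apply alpha_lip].
  - eapply Rle_trans; [apply min_lip|apply beta_lip].
Qed.

Lemma dGH_fib X Y x0 y0 r (hXb : forall x x', mdist X x x' <= 2*r)
  (hYb : forall y y', mdist Y y y' <= 2*r) s t :
  Rbar_le (dGH (Fib X Y x0 y0 s) (Fib X Y x0 y0 t)) (Finite (r * Rabs (s - t))).
Proof.
  assert (Hst : 0 <= Rabs (s - t)) by apply Rabs_pos.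
  assert (hr : 0 <= r) by (specialize (hXb x0 x0); rewrite dist_refl in hXb; lra).
  assert (HK : 0 <= r * Rabs (s - t)) by nra.
  pose proof (dfib_s_lip X Y r hXb hYb s t) as Ls.
  pose proof (dfib_t_lip X Y r hXb hYb s t) as Lt.
  pose proof (dstar_le_s X Y s t) as Ms.
  pose proof (dstar_le_t X Y s t) as Mt.
  pose proof (dstar_tri X Y s t) as T.
  assert (Sy : forall p q, dstar X Y s t p q = dstar X Y s t q p) by (intros; apply dw_sym).
  assert (N : forall p q, 0 <= dstar X Y s t p q) by (intros; apply dw_nonneg, wmin_b).
  set (K := r * Rabs (s - t)) in *. clearbody K.
  apply rbar_le_eps. intros rho Hr.
  set (delta := (rho - K) / 2).
  assert (Hd : 0 < delta) by (unfold delta; lra).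
  assert (Hk : K + delta < rho) by (unfold delta; lra).
  clearbody delta.
  unshelve eapply (glue_dGH (Fib X Y x0 y0 s) (Fib X Y x0 y0 t)
    (fun a b => dstar X Y s t (proj1_sig a) (proj1_sig b) + K + delta)).
  - intros a b. specialize (N (proj1_sig a) (proj1_sig b)). lra.
  - intros [a Ha] [a' Ha'] [b Hb]; cbn [proj1_sig Defs.dist Fib].
    specialize (T a a' b). specialize (Ms a a'). lra.
  - intros [a Ha] [b Hb] [b' Hb']; cbn [proj1_sig Defs.dist Fib].
    specialize (T a b' b). specialize (Mt b' b). lra.
  - intros [a Ha] [a' Ha'] [b Hb]; cbn [proj1_sig Defs.dist Fib].
    specialize (Ls a a'). specialize (T a b a'). rewrite (Sy b a') in T. lra.
  - intros [a Ha] [b Hb] [b' Hb']; cbn [proj1_sig Defs.dist Fib].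
    specialize (Lt b b'). specialize (T b a b'). rewrite (Sy b a) in T. lra.
  - lra.
  - intros [a Ha]. exists (exist _ (projv X Y x0 y0 t a) (projv_C X Y x0 y0 t a)); cbn [proj1_sig Defs.dist Fib].
    pose proof (projv_zero X Y x0 y0 t a). specialize (Mt a (projv X Y x0 y0 t a)). lra.
  - intros [b Hb]. exists (exist _ (projv X Y x0 y0 s b) (projv_C X Y x0 y0 s b)); cbn [proj1_sig Defs.dist Fib].
    pose proof (projv_zero X Y x0 y0 s b). specialize (Ms b (projv X Y x0 y0 s b)).
    rewrite Sy. lra.
Qed.
Lemma a0 : alpha 0 = 1. Proof. unfold alpha, Rmin, Rmax; repeat destruct Rle_dec; lra. Qed.
Lemma b0 : beta 0 = 0. Proof. unfold beta, Rmin, Rmax; repeat destruct Rle_dec; lra. Qed.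
Lemma a2 : alpha 2 = 0. Proof. unfold alpha, Rmin, Rmax; repeat destruct Rle_dec; lra. Qed.
Lemma b2 : beta 2 = 1. Proof. unfold beta, Rmin, Rmax; repeat destruct Rle_dec; lra. Qed.
Lemma ab1 s : 0 <= s <= 2 -> alpha s = 1 \/ beta s = 1.
Proof. intros. unfold alpha, beta, Rmin, Rmax; repeat destruct Rle_dec; lra. Qed.

Lemma fib_diam X Y x0 y0 r (DX : Diam X r) (DY : Diam Y r) s (hs : 0 <= s <= 2) :
  Diam (Fib X Y x0 y0 s) r.
Proof.
  destruct DX as [BX SX], DY as [BY SY].
  split.
  - intros [p Hp] [q Hq]. cbn [Defs.dist Fib proj1_sig]. unfold dfib, dw.
    pose proof (alpha_b s). pose proof (beta_b s).
    pose proof (dist_nonneg X (fst p) (fst q)). pose proof (dist_nonneg Y (snd p) (snd q)).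
    specialize (BX (fst p) (fst q)). specialize (BY (snd p) (snd q)).
    apply Rmax_lub; nra.
  - intros eps He. destruct (ab1 s hs) as [Ha|Hb].
    + destruct (SX eps He) as [x [x' Hx]].
      assert (C1 : Cfib X Y x0 y0 s (x, y0)) by (split; simpl; [auto | intros h; lra]).
      assert (C2 : Cfib X Y x0 y0 s (x', y0)) by (split; simpl; [auto | intros h; lra]).
      exists (exist _ (x, y0) C1), (exist _ (x', y0) C2).
      cbn [Defs.dist Fib proj1_sig]. unfold dfib, dw; simpl. rewrite Ha.
      pose proof (Rmax_l (1 * mdist X x x') (beta s * mdist Y y0 y0)). lra.
    + destruct (SY eps He) as [y [y' Hy]].
      assert (C1 : Cfib X Y x0 y0 s (x0, y)) by (split; simpl; [intros h; lra | auto]).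
      assert (C2 : Cfib X Y x0 y0 s (x0, y')) by (split; simpl; [intros h; lra | auto]).
      exists (exist _ (x0, y) C1), (exist _ (x0, y') C2).
      cbn [Defs.dist Fib proj1_sig]. unfold dfib, dw; simpl. rewrite Hb.
      pose proof (Rmax_r (alpha s * mdist X x0 x0) (1 * mdist Y y y')). lra.
Qed.

Lemma iso0 X Y x0 y0 : isometric (Fib X Y x0 y0 0) X.
Proof.
  assert (C : forall x, Cfib X Y x0 y0 0 (x, y0)).
  { intros x. split; simpl; [auto | rewrite a0; intros h; lra]. }
  exists (fun p => fst (proj1_sig p)), (fun x => exist _ (x, y0) (C x)).
  split; [|split].
  - intros [[x y] [H1 H2]]. apply subset_eq_compat. simpl in *. rewrite (H1 b0). reflexivity.
  - intros x. reflexivity.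
  - intros [[x y] [H1 H2]] [[x' y'] [H1' H2']].
    cbn [Defs.dist Fib proj1_sig]. unfold dfib, dw; simpl.
    rewrite a0, b0. pose proof (dist_nonneg X x x').
    unfold Rmax; destruct Rle_dec; lra.
Qed.

Lemma iso2 X Y x0 y0 : isometric (Fib X Y x0 y0 2) Y.
Proof.
  assert (C : forall y, Cfib X Y x0 y0 2 (x0, y)).
  { intros y. split; simpl; [rewrite b2; intros h; lra | auto]. }
  exists (fun p => snd (proj1_sig p)), (fun y => exist _ (x0, y) (C y)).
  split; [|split].
  - intros [[x y] [H1 H2]]. apply subset_eq_compat. simpl in *. rewrite (H2 a2). reflexivity.
  - intros y. reflexivity.
  - intros [[x y] [H1 H2]] [[x' y'] [H1' H2']].
    cbn [Defs.dist Fib proj1_sig]. unfold dfib, dw; simpl.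
    rewrite a2, b2. pose proof (dist_nonneg Y y y').
    unfold Rmax; destruct Rle_dec; lra.
Qed.

Theorem theorem1 (r : R) (hr : 0 <= r) (X Y : MetricSpace)
  (hX : in_sphere_Delta1 r X) (hY : in_sphere_Delta1 r Y) :
  exists (a b : R) (f : R -> MetricSpace),
    a <= b /\ GH_continuous_on a b f /\
    isometric (f a) X /\ isometric (f b) Y /\
    (forall t, a <= t <= b -> in_sphere_Delta1 r (f t)).
Proof.
  destruct (carrier_inhabited X) as [x0]. destruct (carrier_inhabited Y) as [y0].
  pose proof (sphere_to_diam X r hr hX) as DX.
  pose proof (sphere_to_diam Y r hr hY) as DY.
  exists 0, 2, (Fib X Y x0 y0).
  split; [lra|]. split; [|split; [apply iso0|split; [apply iso2|]]].
  - intros t0 Ht0 eps He. exists (eps / (r + 1)).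
    split; [apply Rdiv_lt_0_compat; lra|].
    intros t Ht Hd.
    pose proof (dGH_fib X Y x0 y0 r (proj1 DX) (proj1 DY) t0 t) as H.
    assert (Hlt : r * Rabs (t0 - t) < eps).
    { assert (r * Rabs (t0 - t) <= r * (eps / (r + 1))).
      { rewrite Rabs_minus_sym. apply Rmult_le_compat_l; lra. }
      assert (r * (eps / (r + 1)) < eps).
      { apply (Rmult_lt_reg_r (r + 1)); [lra|].
        replace (r * (eps / (r + 1)) * (r + 1)) with (r * eps) by (field; lra). nra. }
      lra. }
    destruct (dGH (Fib X Y x0 y0 t0) (Fib X Y x0 y0 t)); simpl in *; auto; lra.
  - intros t Ht. apply diam_to_sphere; auto. apply fib_diam; auto.
Qed.
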